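(* Let $a, b$ be positive integers with $b > 2a$, and let $T_{a,b} = \{C_{i,1} : 1 \le i \le 2a+1\} \cup \{C_{a+1,j} : 2 \le j \le b+1\}$, of size $n = 2a+b+1$. Then on the $n \times n$ board, $$\mathrm{cp}_{\mathrm{fixed}}(T_{a,b}) = \left\lceil \frac{b+1}{2a+1} \right\rceil.$$
   Context: For integers $i,j$, $C_{i,j}$ denotes the unit square cell in column $i$ and row $j$ of the integer grid (columns numbered left to right, rows numbered top to bottom). A polyomino is a finite set of cells; its size is its number of cells. For a polyomino $\mathcal{P}$ of size $n$ the board is $\mathbb{B} = \{C_{i,j} : 1 \le i,j \le n\}$. The shift of $\mathcal{P}$ by integers $(c,d)$ is $\mathcal{P}+(c,d) = \{C_{x+c,y+d} : C_{x,y} \in \mathcal{P}\}$; a fixed copy of $\mathcal{P}$ is any shift of $\mathcal{P}$ (no rotations). A set of polyominoes is a valid arrangement if each is contained in $\mathbb{B}$ and they are pairwise disjoint. A fixed packing of $\mathcal{P}$ is a set of fixed copies of $\mathcal{P}$ forming a valid arrangement such that adding any further fixed copy of $\mathcal{P}$ yields an invalid arrangement. The clumsy fixed packing number $\mathrm{cp}_{\mathrm{fixed}}(\mathcal{P})$ is the minimum number of polyominoes in a fixed packing of $\mathcal{P}$ on the $n \times n$ board. *)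

(* Defs.v *)
From Stdlib Require Import ZArith List Arith.
Import ListNotations.
Open Scope Z_scope.

(* C_{i,j} = (i, j) : column i, row j *)
Definition cell := (Z * Z)%type.

Definition cell_eq_dec : forall x y : cell, {x = y} + {x <> y}.
Proof. decide equality; apply Z.eq_dec. Defined.

(* A polyomino is a finite set of cells, given by a list (duplicates irrelevant). *)
Definition polyomino := list cell.

Definition psize (P : polyomino) : nat := length (nodup cell_eq_dec P).

Definition shift (P : polyomino) (v : Z * Z) : polyomino :=
  map (fun x : cell => (fst x + fst v, snd x + snd v)) P.

Definition in_board (n : Z) (x : cell) : Prop :=
  1 <= fst x <= n /\ 1 <= snd x <= n.

(* A family of fixed copies of P is encoded by its (distinct) list of shift
   vectors S; the copies are the shift P v, v in S. *)
Definition valid_arrangement (n : Z) (P : polyomino) (S : list (Z * Z)) : Prop :=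
  NoDup S /\
  (forall v, In v S -> forall x, In x (shift P v) -> in_board n x) /\
  (forall v w, In v S -> In w S -> v <> w ->
     forall x, In x (shift P v) -> ~ In x (shift P w)).

Definition fixed_packing (n : Z) (P : polyomino) (S : list (Z * Z)) : Prop :=
  valid_arrangement n P S /\
  forall v, ~ In v S -> ~ valid_arrangement n P (v :: S).

Definition cp_fixed_is (P : polyomino) (k : nat) : Prop :=
  let n := Z.of_nat (psize P) in
  (exists S, fixed_packing n P S /\ length S = k) /\
  (forall S, fixed_packing n P S -> (k <= length S)%nat).

Definition T_ab (a b : nat) : polyomino :=
  map (fun i => (Z.of_nat i, 1)) (seq 1 (2 * a + 1)) ++
  map (fun j => (Z.of_nat a + 1, Z.of_nat j)) (seq 2 b).

(* Main.v *)
From Pilot Require Import Defs.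
From Stdlib Require Import ZArith List Arith Lia Classical.
Import ListNotations.
Import Pilot.Defs.
Open Scope Z_scope.

Lemma NoDup_map_in {X Y} (f : X -> Y) (l : list X) :
  NoDup l -> (forall x y, In x l -> In y l -> f x = f y -> x = y) -> NoDup (map f l).
Proof.
  induction l as [|x l IH]; intros Hn Hi; simpl; constructor.
  - intros Hin. apply in_map_iff in Hin as [y [Hy Hyl]].
    inversion Hn; subst. assert (y = x) by (apply Hi; simpl; auto). subst; contradiction.
  - inversion Hn; subst. apply IH; auto. intros; apply Hi; simpl; auto.
Qed.

Lemma in_T (a b : nat) (c d : Z) (x : cell) :
  In x (shift (T_ab a b) (c, d)) <->
  (snd x = d + 1 /\ c + 1 <= fst x <= c + 2 * Z.of_nat a + 1) \/
  (fst x = c + Z.of_nat a + 1 /\ d + 2 <= snd x <= d + Z.of_nat b + 1).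
Proof.
  unfold shift, T_ab. rewrite map_app, in_app_iff, !map_map.
  split.
  - intros [H|H]; apply in_map_iff in H as [i [Hi Hs]]; apply in_seq in Hs;
      subst x; cbn [fst snd]; [left|right]; lia.
  - destruct x as [x y]; cbn [fst snd]. intros [[H1 H2]|[H1 H2]]; [left|right]; apply in_map_iff.
    + exists (Z.to_nat (x - c)). split; [rewrite Z2Nat.id by lia; f_equal; lia|]. apply in_seq; lia.
    + exists (Z.to_nat (y - d)). split; [rewrite Z2Nat.id by lia; f_equal; lia|]. apply in_seq; lia.
Qed.

Lemma psize_T (a b : nat) : psize (T_ab a b) = (2 * a + b + 1)%nat.
Proof.
  unfold psize. rewrite nodup_fixed_point.
  - unfold T_ab. rewrite length_app, !length_map, !length_seq. lia.
  - unfold T_ab. apply NoDup_app.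
    + apply NoDup_map_in; [apply seq_NoDup|]. intros x y _ _ H; injection H; lia.
    + apply NoDup_map_in; [apply seq_NoDup|]. intros x y _ _ H; injection H; lia.
    + intros p H1 H2. apply in_map_iff in H1 as [i [<- _]].
      apply in_map_iff in H2 as [j [Hj Hs]]. apply in_seq in Hs. injection Hj; lia.
Qed.

Definition overlap a b (v w : Z * Z) :=
  exists x, In x (shift (T_ab a b) v) /\ In x (shift (T_ab a b) w).

Lemma overlap_nec a b c d c' d' : overlap a b (c, d) (c', d') ->
  (d = d' /\ Z.abs (c - c') <= 2 * Z.of_nat a) \/ Z.abs (c - c') <= Z.of_nat a.
Proof.
  intros [x [H1 H2]]. apply in_T in H1; apply in_T in H2. lia.
Qed.

Lemma overlap_suff a b c d c' d' : (2 * a < b)%nat ->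
  0 <= d <= 2 * Z.of_nat a -> 0 <= d' <= 2 * Z.of_nat a ->
  ((d = d' /\ Z.abs (c - c') <= 2 * Z.of_nat a) \/ Z.abs (c - c') <= Z.of_nat a) ->
  overlap a b (c, d) (c', d').
Proof.
  intros Hab Hd Hd' H.
  destruct (Z.eq_dec d d') as [<-|Hne].
  - exists (Z.max c c' + 1, d + 1). rewrite !in_T; cbn [fst snd]. lia.
  - destruct (Z_lt_le_dec d d').
    + exists (c + Z.of_nat a + 1, d' + 1). rewrite !in_T; cbn [fst snd]. lia.
    + exists (c' + Z.of_nat a + 1, d + 1). rewrite !in_T; cbn [fst snd]. lia.
Qed.


Lemma board_copy a b c d : (0 < b)%nat ->
  (forall x, In x (Defs.shift (T_ab a b) (c, d)) ->
     in_board (2 * Z.of_nat a + Z.of_nat b + 1) x) <->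
  (0 <= c <= Z.of_nat b /\ 0 <= d <= 2 * Z.of_nat a).
Proof.
  intros Hb. split.
  - intros H.
    pose proof (H (c + 1, d + 1) ltac:(apply in_T; cbn [fst snd]; lia)) as H1.
    pose proof (H (c + 2 * Z.of_nat a + 1, d + 1) ltac:(apply in_T; cbn [fst snd]; lia)) as H2.
    pose proof (H (c + Z.of_nat a + 1, d + Z.of_nat b + 1) ltac:(apply in_T; cbn [fst snd]; lia)) as H3.
    unfold in_board in *; cbn [fst snd] in *; lia.
  - intros Hr x Hx. apply in_T in Hx. unfold in_board. lia.
Qed.

Lemma cover_count (a : nat) (L S : list Z) :
  NoDup S ->
  (forall x, In x S -> exists c, In c L /\ Z.abs (c - x) <= Z.of_nat a) ->
  (length S <= length L * (2 * a + 1))%nat.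
Proof.
  revert S. induction L as [|c L IH]; intros S Hn Hc.
  - destruct S as [|y S]; simpl; [lia|].
    destruct (Hc y (or_introl eq_refl)) as [c [[] _]].
  - set (f := fun x => Z.leb (Z.abs (c - x)) (Z.of_nat a)).
    rewrite <- (filter_length f S).
    assert (H1 : (length (filter f S) <= 2 * a + 1)%nat).
    { set (I := map (fun i => c - Z.of_nat a + Z.of_nat i) (seq 0 (2 * a + 1))).
      replace (2 * a + 1)%nat with (length I) by (unfold I; rewrite length_map, length_seq; lia).
      apply NoDup_incl_length; [apply NoDup_filter; auto|].
      intros x Hx. apply filter_In in Hx as [_ Hx]. unfold f in Hx. apply Z.leb_le in Hx.
      unfold I. apply in_map_iff. exists (Z.to_nat (x - c + Z.of_nat a)).
      split; [rewrite Z2Nat.id by lia; lia|]. apply in_seq; lia. }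
    assert (H2 : (length (filter (fun x => negb (f x)) S) <= length L * (2 * a + 1))%nat).
    { apply IH; [apply NoDup_filter; auto|].
      intros x Hx. apply filter_In in Hx as [Hx Hf]. unfold f in Hf.
      destruct (Hc x Hx) as [c' [[<-|Hc'] Hd]].
      - apply Z.leb_le in Hd. rewrite Hd in Hf. discriminate.
      - eauto. }
    simpl. lia.
Qed.

Section Lower.
Variables (a b : nat).
Hypotheses (Ha : (0 < a)%nat) (Hb : (0 < b)%nat) (Hab : (2 * a < b)%nat).
Let A := Z.of_nat a.
Let B := Z.of_nat b.
Let n := 2 * A + B + 1.

Lemma covered (S : list (Z * Z)) : fixed_packing n (T_ab a b) S ->
  forall x, 0 <= x <= B -> exists s, In s S /\ Z.abs (fst s - x) <= A.
Proof.
  intros [[HnD [Hbd Hdj]] Hmax] x Hx.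
  assert (Hr : forall s, In s S -> 0 <= fst s <= B /\ 0 <= snd s <= 2 * A).
  { intros [c d] Hs. apply (board_copy a b c d Hb). apply Hbd; auto. }
  assert (Hsep : forall s t, In s S -> In t S -> s <> t -> A < Z.abs (fst s - fst t)).
  { intros [c d] [c' d'] Hs Ht Hne. cbn [fst snd].
    destruct (Z_lt_le_dec A (Z.abs (c - c'))) as [|Hle]; auto. exfalso.
    pose proof (Hr _ Hs); pose proof (Hr _ Ht); cbn [fst snd] in *.
    destruct (overlap_suff a b c d c' d' Hab ltac:(lia) ltac:(lia) (or_intror Hle)) as [y [Hy1 Hy2]].
    exact (Hdj _ _ Hs Ht Hne y Hy1 Hy2). }
  apply NNPP; intro Hno.
  assert (Hfar : forall s, In s S -> A < Z.abs (fst s - x)).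
  { intros s Hs. destruct (Z_lt_le_dec A (Z.abs (fst s - x))); auto. exfalso; eauto. }
  assert (Hex : exists d', 0 <= d' <= 2 /\
            forall s, In s S -> snd s = d' -> 2 * A < Z.abs (fst s - x)).
  { apply NNPP; intro H.
    assert (G : forall d', 0 <= d' <= 2 -> exists s, In s S /\ snd s = d' /\
                  Z.abs (fst s - x) <= 2 * A).
    { intros d' Hd'. apply NNPP; intro H2. apply H. exists d'. split; auto.
      intros s Hs Hsd. destruct (Z_lt_le_dec (2 * A) (Z.abs (fst s - x))); auto.
      exfalso; apply H2; eauto. }
    destruct (G 0 ltac:(lia)) as [s0 [H0 [E0 F0]]].
    destruct (G 1 ltac:(lia)) as [s1 [H1 [E1 F1]]].
    destruct (G 2 ltac:(lia)) as [s2 [H2 [E2 F2]]].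
    assert (N01 : s0 <> s1) by (intros ->; lia).
    assert (N02 : s0 <> s2) by (intros ->; lia).
    assert (N12 : s1 <> s2) by (intros ->; lia).
    pose proof (Hsep _ _ H0 H1 N01). pose proof (Hsep _ _ H0 H2 N02).
    pose proof (Hsep _ _ H1 H2 N12).
    pose proof (Hfar _ H0). pose proof (Hfar _ H1). pose proof (Hfar _ H2).
    lia. }
  destruct Hex as [d' [Hd' Hrow]].
  assert (Hnin : ~ In (x, d') S).
  { intros H. pose proof (Hfar _ H). cbn [fst] in *. lia. }
  apply (Hmax (x, d') Hnin). split; [constructor; assumption|split].
  - intros v [<-|Hv]; [|apply Hbd; auto]. apply (board_copy a b x d' Hb). unfold A, B in *; lia.
  - intros v w Hv Hw Hne y Hy1 Hy2.
    destruct Hv as [<-|Hv]; destruct Hw as [<-|Hw].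
    + contradiction.
    + destruct w as [c e].
      pose proof (overlap_nec a b x d' c e (ex_intro _ y (conj Hy1 Hy2))).
      pose proof (Hfar _ Hw). cbn [fst snd] in *.
      destruct (Z.eq_dec e d') as [He|He].
      * pose proof (Hrow _ Hw He). cbn [fst] in *. lia.
      * lia.
    + destruct v as [c e].
      pose proof (overlap_nec a b c e x d' (ex_intro _ y (conj Hy1 Hy2))).
      pose proof (Hfar _ Hv). cbn [fst snd] in *.
      destruct (Z.eq_dec e d') as [He|He].
      * pose proof (Hrow _ Hv He). cbn [fst] in *. lia.
      * lia.
    + exact (Hdj v w Hv Hw Hne y Hy1 Hy2).
Qed.

Lemma lower (S : list (Z * Z)) : fixed_packing n (T_ab a b) S ->
  (b + 1 <= length S * (2 * a + 1))%nat.
Proof.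
  intros HS.
  replace (b + 1)%nat with (length (map Z.of_nat (seq 0 (b + 1)))) by
    (rewrite length_map, length_seq; lia).
  rewrite <- (length_map fst S).
  apply cover_count.
  - apply NoDup_map_in; [apply seq_NoDup|]. intros; lia.
  - intros x Hx. apply in_map_iff in Hx as [i [<- Hi]]. apply in_seq in Hi.
    destruct (covered S HS (Z.of_nat i) ltac:(unfold B; lia)) as [s [Hs Hd]].
    exists (fst s). split; [apply in_map; auto|]. unfold A in Hd. lia.
Qed.
End Lower.

Section Upper.
Variables (a b k : nat).
Hypotheses (Ha : (0 < a)%nat) (Hb : (0 < b)%nat) (Hab : (2 * a < b)%nat).
Hypotheses (Hk1 : ((2 * a + 1) * (k - 1) <= b)%nat) (Hk2 : (b + 1 <= (2 * a + 1) * k)%nat).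
Let A := Z.of_nat a.
Let B := Z.of_nat b.
Let K := Z.of_nat k.
Let n := 2 * A + B + 1.

Definition cc (I : Z) := Z.min (A + (2 * A + 1) * I) B.
Definition dd (I : Z) := if I <? K - 1 then 0 else 1.
Definition Sk := map (fun i : nat => (cc (Z.of_nat i), dd (Z.of_nat i))) (seq 0 k).

Lemma ZK1 : (2 * A + 1) * (K - 1) <= B.
Proof. unfold A, B, K. assert (1 <= k)%nat by nia. nia. Qed.
Lemma ZK2 : B + 1 <= (2 * A + 1) * K.
Proof. unfold A, B, K. nia. Qed.

Lemma sep I J : 0 <= I < J -> J < K ->
  A + 1 <= cc J - cc I /\ (dd I = dd J -> 2 * A + 1 <= cc J - cc I).
Proof.
  intros HI HJ. pose proof ZK1. pose proof ZK2.
  assert (HA : 1 <= A) by (unfold A; lia).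
  assert (E : cc I = A + (2 * A + 1) * I).
  { unfold cc. apply Z.min_l. nia. }
  rewrite E. unfold dd, cc.
  destruct (Z.ltb_spec I (K - 1)); [|lia].
  destruct (Z.ltb_spec J (K - 1)).
  - assert (A + (2 * A + 1) * J <= B) by nia.
    rewrite Z.min_l by lia. split; [nia|]. intros _; nia.
  - split; [|discriminate]. assert (J = K - 1) by lia. subst J.
    destruct (Z.min_spec (A + (2 * A + 1) * (K - 1)) B) as [[_ ->]|[_ ->]]; nia.
Qed.

Lemma coverI x : 0 <= x <= B -> exists I, 0 <= I < K /\ Z.abs (cc I - x) <= A.
Proof.
  intros Hx. pose proof ZK1. pose proof ZK2.
  assert (HA : 1 <= A) by (unfold A; lia).
  pose proof (Z.div_mod x (2 * A + 1) ltac:(lia)) as Hdm.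
  pose proof (Z.mod_pos_bound x (2 * A + 1) ltac:(lia)) as Hmb.
  set (q := x / (2 * A + 1)) in *. set (r := x mod (2 * A + 1)) in *.
  assert (0 <= q) by nia.
  assert (q < K) by nia.
  exists q. split; [lia|]. unfold cc.
  destruct (Z.min_spec (A + (2 * A + 1) * q) B) as [[_ ->]|[Hm ->]]; [lia|].
  assert (q = K - 1).
  { destruct (Z.eq_dec q (K - 1)); auto. assert (q <= K - 2) by lia. nia. }
  subst q. nia.
Qed.

Lemma in_Sk v : In v Sk <-> exists I, 0 <= I < K /\ v = (cc I, dd I).
Proof.
  unfold Sk. rewrite in_map_iff. split.
  - intros [i [<- Hi]]. apply in_seq in Hi. exists (Z.of_nat i). split; auto. unfold K; lia.
  - intros [I [HI ->]]. exists (Z.to_nat I). rewrite Z2Nat.id by lia. split; auto.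
    apply in_seq. unfold K in HI; lia.
Qed.

Lemma Sk_valid : valid_arrangement n (T_ab a b) Sk.
Proof.
  assert (HA : 1 <= A) by (unfold A; lia).
  assert (Hdis : forall I J, 0 <= I < K -> 0 <= J < K -> I <> J ->
             ~ overlap a b (cc I, dd I) (cc J, dd J)).
  { intros I J HI HJ HIJ Ho. apply overlap_nec in Ho. fold A in Ho.
    destruct (Z_lt_le_dec I J).
    - destruct (sep I J ltac:(lia) ltac:(lia)) as [S1 S2].
      destruct (Z.eq_dec (dd I) (dd J)); [specialize (S2 e)|]; lia.
    - destruct (sep J I ltac:(lia) ltac:(lia)) as [S1 S2].
      destruct (Z.eq_dec (dd J) (dd I)); [specialize (S2 e)|]; lia. }
  split; [|split].
  - unfold Sk. apply NoDup_map_in; [apply seq_NoDup|].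
    intros i j Hi Hj He. apply in_seq in Hi; apply in_seq in Hj.
    destruct (Nat.eq_dec i j); auto. exfalso.
    apply (Hdis (Z.of_nat i) (Z.of_nat j)); try (unfold K; lia).
    rewrite He. exists (cc (Z.of_nat j) + 1, dd (Z.of_nat j) + 1).
    split; apply in_T; cbn [fst snd]; lia.
  - intros v Hv. apply in_Sk in Hv as [I [HI ->]].
    apply board_copy; auto. pose proof ZK1.
    unfold cc, dd. fold A B. destruct (I <? K - 1); split; try lia.
  - intros v w Hv Hw Hne y Hy1 Hy2.
    apply in_Sk in Hv as [I [HI ->]]. apply in_Sk in Hw as [J [HJ ->]].
    apply (Hdis I J HI HJ); [intros ->; auto|]. exists y; auto.
Qed.

Lemma Sk_packing : fixed_packing n (T_ab a b) Sk.
Proof.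
  split; [apply Sk_valid|].
  intros [x e] Hnin [HnD [Hbd Hdj]].
  assert (Hr := proj1 (board_copy a b x e Hb) (Hbd (x, e) (or_introl eq_refl))).
  fold A B in Hr.
  destruct (coverI x ltac:(lia)) as [I [HI Hc]].
  assert (Hw : In (cc I, dd I) Sk) by (apply in_Sk; eauto).
  assert (Hne : (x, e) <> (cc I, dd I)) by (intros E; rewrite E in Hnin; auto).
  assert (Hdd : 0 <= dd I <= 2 * A) by (unfold dd, A; destruct (I <? K - 1); lia).
  destruct (overlap_suff a b x e (cc I) (dd I) Hab ltac:(lia) Hdd ltac:(right; fold A; lia))
    as [y [Hy1 Hy2]].
  exact (Hdj _ _ (or_introl eq_refl) (or_intror Hw) Hne y Hy1 Hy2).
Qed.

Lemma Sk_length : length Sk = k.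
Proof. unfold Sk. rewrite length_map, length_seq. auto. Qed.
End Upper.

Theorem theorem7 (a b : nat) :
  (0 < a)%nat -> (0 < b)%nat -> (2 * a < b)%nat ->
  psize (T_ab a b) = (2 * a + b + 1)%nat /\
  cp_fixed_is (T_ab a b) ((b + 1 + 2 * a) / (2 * a + 1))%nat.
Proof.
  intros Ha Hb Hab. split; [apply psize_T|].
  unfold cp_fixed_is. rewrite psize_T.
  replace (Z.of_nat (2 * a + b + 1)) with (2 * Z.of_nat a + Z.of_nat b + 1) by lia.
  set (k := ((b + 1 + 2 * a) / (2 * a + 1))%nat).
  pose proof (Nat.div_mod (b + 1 + 2 * a) (2 * a + 1) ltac:(lia)) as Hdm.
  pose proof (Nat.mod_upper_bound (b + 1 + 2 * a) (2 * a + 1) ltac:(lia)) as Hmb.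
  fold k in Hdm.
  assert (Hk1 : ((2 * a + 1) * (k - 1) <= b)%nat) by nia.
  assert (Hk2 : (b + 1 <= (2 * a + 1) * k)%nat) by nia.
  split.
  - exists (Sk a b k). split.
    + apply Sk_packing; auto.
    + apply Sk_length.
  - intros S HS. pose proof (lower a b Ha Hb Hab S HS).
    unfold k. apply Nat.lt_succ_r. apply Nat.div_lt_upper_bound; nia.
Qed.
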